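(* Let $A$ and $B$ be disjoint cubic graphs with $v(A)\equiv 2\pmod 6$ and $v(B)\equiv 2\pmod 6$, let $a=a_1a_2\in E(A)$ and $b=b_1b_2\in E(B)$, and let $G=Aa|bB$ with middle edge $z=z_1z_2$. Then $v(G)\equiv 0\pmod 6$ and $G$ has no $\Lambda$-factor containing the edge $z$.
   Context: Graphs are finite, undirected, without loops or multiple edges; $v(G)=|V(G)|$. For disjoint graphs $A,B$ with $a=a_1a_2\in E(A)$, $b=b_1b_2\in E(B)$, $AabB$ is obtained from $(A-a)\cup(B-b)$ (edge deletions) by adding the edges $a_1b_1,a_2b_2$; $Aa|bB$ is obtained from $AabB$ by replacing each edge $a_ib_i$ ($i=1,2$) by a path $a_iz_ib_i$ through a new vertex $z_i$ and adding the new edge $z=z_1z_2$, the middle edge. A $\Lambda$-factor of a graph is a spanning subgraph each of whose components is a path on 3 vertices. *)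

(* Defs.v *)
From mathcomp Require Import all_boot.
Set Implicit Arguments. Unset Strict Implicit. Unset Printing Implicit Defensive.

Definition simple_graph (T : finType) (e : rel T) : Prop :=
  symmetric e /\ irreflexive e.

Definition cubic (T : finType) (e : rel T) : Prop :=
  forall x : T, #|[set y | e x y]| = 3.

(* Vertices of A a|b B: the vertices of A, of B, and two new vertices
   z1 = inr false, z2 = inr true. *)
Notation split_vertex TA TB := ((TA + TB) + bool)%type.

Definition same_edge (T : eqType) (x y u v : T) : bool :=
  ((x == u) && (y == v)) || ((x == v) && (y == u)).

Definition to_mid (T : eqType) (u1 u2 : T) (x : T) (z : bool) : bool :=
  ((x == u1) && ~~ z) || ((x == u2) && z).

(* The graph A a|b B (A - a) U (B - b) plus paths a1 z1 b1, a2 z2 b2 and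
   the middle edge z1 z2. *)
Definition split_join (TA TB : finType) (eA : rel TA) (eB : rel TB)
  (a1 a2 : TA) (b1 b2 : TB) : rel (split_vertex TA TB) :=
  fun p q =>
    match p, q with
    | inl (inl x), inl (inl y) => eA x y && ~~ same_edge x y a1 a2
    | inl (inr x), inl (inr y) => eB x y && ~~ same_edge x y b1 b2
    | inl (inl _), inl (inr _) => false
    | inl (inr _), inl (inl _) => false
    | inl (inl x), inr z => to_mid a1 a2 x z
    | inr z, inl (inl x) => to_mid a1 a2 x z
    | inl (inr x), inr z => to_mid b1 b2 x z
    | inr z, inl (inr x) => to_mid b1 b2 x z
    | inr z, inr z' => z != z'
    end.

(* A Lambda-factor of (T, e): a spanning subgraph, given by its edge relation
   F (symmetric, contained in e), each of whose connected components is a path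
   on 3 vertices u - c - w. *)
Definition Lambda_factor (T : finType) (e : rel T) (F : rel T) : Prop :=
  symmetric F /\ subrel F e /\
  forall x : T, exists u c w : T,
    [/\ uniq [:: u; c; w],
        [set y | connect F x y] = [set u; c; w] &
        forall p q, p \in [set u; c; w] -> q \in [set u; c; w] ->
          F p q = same_edge p q u c || same_edge p q c w].

(* Main.v *)
Require Import Defs.
From mathcomp Require Import all_boot.
From mathcomp Require Import zify.

Lemma comp3_div (T : finType) (F : rel T) (K : {set T}) :
  connect_sym F ->
  (forall x, #|[set y | connect F x y]| = 3) ->
  (forall x y, x \in K -> connect F x y -> y \in K) ->
  3 %| #|K|.
Proof.
move=> sF c3.
move: {2}#|K| (leqnn #|K|) => n; elim: n K => [|n IH] K hK cl.
  by move: hK; rewrite leqn0 => /eqP ->.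
case: (set_0Vmem K) => [->|[x xK]]; first by rewrite cards0.
set C := [set y | connect F x y].
have CK : C \subset K by apply/subsetP => y; rewrite inE; exact: cl.
have -> : #|K| = #|K :\: C| + #|C|.
  by rewrite cardsDS // subnK // subset_leq_card.
rewrite c3 dvdn_addr // IH //.
- rewrite cardsDS // c3.
  have : 3 <= #|K| by rewrite -(c3 x) subset_leq_card.
  lia.
- move=> y w; rewrite !inE => /andP[yC yK] yw.
  rewrite (cl y w yK yw) andbT; apply: contra yC => xw.
  by apply: connect_trans xw _; rewrite sF.
Qed.

Lemma card3 (T : finType) (u c w : T) : uniq [:: u; c; w] -> #|[set u; c; w]| = 3.
Proof.
rewrite /= !inE negb_or => /andP[/andP[uc uw] /andP[cw _]].
rewrite -setUA cardsU1 cardsU1 cards1 !inE negb_or uc uw cw.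
by [].
Qed.

Definition isA {TA TB : finType} (x : split_vertex TA TB) : bool :=
  if x is inl (inl _) then true else false.

Theorem mainTheorem9 (TA TB : finType) (eA : rel TA) (eB : rel TB)
  (a1 a2 : TA) (b1 b2 : TB) :
  simple_graph eA -> simple_graph eB -> cubic eA -> cubic eB ->
  #|TA| %% 6 = 2 -> #|TB| %% 6 = 2 ->
  eA a1 a2 -> eB b1 b2 ->
  #|{: split_vertex TA TB}| %% 6 = 0 /\
  ~ (exists F : rel (split_vertex TA TB),
       Lambda_factor (split_join eA eB a1 a2 b1 b2) F /\ F (inr false) (inr true)).
Proof.
move=> _ _ _ _ hA hB _ _.
split; first by rewrite !card_sum card_bool; lia.
move=> [F [[sF [subF hF]] Fz]].
have cs : connect_sym F by apply: sym_connect_sym.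
have c3 : forall x, #|[set y | connect F x y]| = 3.
  by move=> x; have [u [c [w [un -> _]]]] := hF x; exact: card3.
set z1 : split_vertex TA TB := inr false.
set z2 : split_vertex TA TB := inr true.
set Z := [set y | connect F z1 y].
set SA := [set y : split_vertex TA TB | isA y].
set K := [set y | isA y && ~~ connect F z1 y].
have cz2 : connect F z1 z2 by apply: connect1.
have clK : closed F K.
  move=> p q Fpq; rewrite !inE.
  have hpq : connect F z1 q = connect F z1 p.
    apply/idP/idP => h.
      by apply: connect_trans h _; rewrite cs connect1.
    by apply: connect_trans h (connect1 Fpq).
  rewrite hpq.
  case cp: (connect F z1 p); rewrite ?andbF //= !andbT.
  have ep := subF _ _ Fpq.
  move: hpq; rewrite cp => hq.
  case: p q Fpq ep cp hq => [[p|p]|[]] [[q|q]|[]] //= Fpq ep cp hq;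
    by move: cp hq; rewrite /z1 /z2 ?connect0 ?cz2.
have dK : 3 %| #|K|.
  apply: (@comp3_div _ F K cs c3) => x y xK xy.
  by rewrite -(closed_connect clK xy).
have hSA : #|SA| = #|TA|.
  have -> : SA = [set inl (inl a) | a : TA].
    apply/setP => y; rewrite inE; case: y => [[a|a]|b] /=.
    - by apply/esym/imsetP; exists a.
    - by apply/esym/imsetP => -[a' _].
    - by apply/esym/imsetP => -[a' _].
  rewrite card_imset ?cardT //.
  by move=> a a' [].
have hsplit : #|SA| = #|SA :&: Z| + #|K|.
  rewrite -(cardsID Z SA); congr (_ + _); apply: eq_card => y.
  by rewrite !inE andbC.
have hZ : #|SA :&: Z| <= 1.
  have : #|SA :&: Z| + 2 <= #|Z|.
    have sub : (SA :&: Z) :|: [set z1; z2] \subset Z.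
      apply/subsetP => y; rewrite !inE => /orP[/andP[_ ->]//|/orP[]/eqP->//].
    have := subset_leq_card sub.
    rewrite cardsU.
    have -> : SA :&: Z :&: [set z1; z2] = set0.
      apply/setP => y; rewrite !inE; case: y => [[?|?]|?] //=; by rewrite ?andbF ?orbF.
    by rewrite cards0 cards2 subn0.
  rewrite c3; lia.
move: hA; rewrite -hSA hsplit.
move: dK hZ; lia.
Qed.
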